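(* For every set of formulas $\Gamma$ and formula $\varphi$: $\Gamma\vdash_{\mathsf{NeL}+\{\mathrm{I}\}}\varphi$ iff $\Gamma\models_{\mathfrak{N}_w^{\mathrm{I}}}\varphi$, where (I) is the rule scheme $\varphi\Rightarrow\varphi^{*}\vdash\psi$ and $\mathfrak{N}_w^{\mathrm{I}}$ is the class of $\mathfrak{N}_w$-models $(\mathbf A,\perp,\{\mathsf{t},\mathsf{f}\})$ such that for all $x,y\in A$, $x\perp x$ implies $x=y$.
   Context: Formulas are built from a countably infinite set of variables using binary $\otimes,\circ$ and unary ${}^{*}$; $\mathbf{Fm}$ is the formula algebra. Abbreviations (also term operations): $\varphi\Rightarrow\psi:=(\varphi\circ\psi^{*})^{*}$; $\varphi\Leftrightarrow\psi:=(\varphi\Rightarrow\psi)\otimes(\psi\Rightarrow\varphi)$; $\varphi\not\Leftrightarrow\psi:=(\varphi\Leftrightarrow\psi)^{*}$; $\varphi\not\Leftrightarrow\psi\not\Leftrightarrow\chi:=((\varphi\not\Leftrightarrow\psi)\otimes(\varphi\not\Leftrightarrow\chi))\otimes(\psi\not\Leftrightarrow\chi)$. $\mathsf{NeL}$: axiom schemes (A1) $\varphi\Rightarrow\varphi$; (A2) $(\varphi\circ\psi)\Rightarrow(\psi\circ\varphi)$; (A3) $\varphi\Rightarrow\varphi^{**}$; (A4) $(\varphi\Rightarrow\psi)\Rightarrow(\varphi\circ\psi)$; (A5) $(\varphi\otimes\psi)\Leftrightarrow(\psi\otimes\varphi)$; (A6) $((\varphi\otimes\psi)\Rightarrow\chi)\Rightarrow((\varphi\otimes\chi^{*})\Rightarrow\psi^{*})$;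 (A7) $(\varphi\not\Leftrightarrow\psi\not\Leftrightarrow\chi)\Rightarrow((\varphi\Rightarrow\psi)\Rightarrow((\psi\Rightarrow\chi)\Rightarrow(\varphi\Rightarrow\chi)))$; rules on arbitrary formulas: $\varphi\Rightarrow\psi,\varphi/\psi$; $\varphi,\psi/\varphi\otimes\psi$; $\varphi\Leftrightarrow\psi,\chi/\chi'$ ($\chi'$ from $\chi$ replacing one or more occurrences of $\varphi$ by $\psi$); $\varphi\otimes\psi/\varphi$. $\mathsf{NeL}+\{\mathrm{I}\}$ adds the rule scheme (I). A weak $\mathcal{N}$-algebra is an algebra $(A,\otimes,\circ,{}^{*})$ of type $(2,2,1)$ with $\otimes,\circ$ commutative, $x^{**}=x$, $(x\otimes y)\circ z=(x\otimes z)\circ y$. With $\mathsf{t}\ne\mathsf{f}$ symbols not in $A$, $\overline A=A\cup\{\mathsf{t},\mathsf{f}\}$, an $\mathfrak{N}_w$-model is $(\mathbf A,\perp,\{\mathsf{t},\mathsf{f}\})$, $\mathbf A$ a weak $\mathcal{N}$-algebra, $\perp\subseteq\overline A\times\overline A$, such that for all $x,y,z\in A$: (a) $x\perp x^{*}$; (b) $x\perp y^{*}$ and $y\perp x^{*}$ imply $x=y$; (c) $x\perp y$ iff $x\circ y\perp\mathsf{t}$; (d) $x\perp\mathsf{t}$ iff $x^{*}\perp\mathsf{f}$; (e) $x\perp\mathsf{f}$ and $y\perp\mathsf{f}$ iff $x\otimes y\perp\mathsf{f}$; (f) $(x\circ y^{*})^{*}\perp(x\circ y)^{*}$; (g) $x\perp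 y$ and $x\perp\mathsf{f}$ imply $y\perp\mathsf{t}$; (h) $(x\not\Leftrightarrow y\not\Leftrightarrow z)\perp((x\Rightarrow y)\Rightarrow((y\Rightarrow z)\Rightarrow(x\Rightarrow z)))^{*}$. $F_\perp=\{a\in A:a\perp\mathsf{f}\}$. For a class $K$ of such models, $\Gamma\models_K\varphi$ iff there is a finite $\Gamma'\subseteq\Gamma$ such that for every model in $K$ and every homomorphism $h:\mathbf{Fm}\to\mathbf A$, $h(\Gamma')\subseteq F_\perp$ implies $h(\varphi)\in F_\perp$. *)

(* Defs.v *)
From Stdlib Require Import List.
Import ListNotations.

Inductive fm : Type :=
| Var : nat -> fm
| Tens : fm -> fm -> fm
| Circ : fm -> fm -> fm
| Star : fm -> fm.

Definition Imp (a b : fm) : fm := Star (Circ a (Star b)).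
Definition Iff (a b : fm) : fm := Tens (Imp a b) (Imp b a).
Definition NIff (a b : fm) : fm := Star (Iff a b).
Definition NIff3 (a b c : fm) : fm :=
  Tens (Tens (NIff a b) (NIff a c)) (NIff b c).

Inductive repl0 (p q : fm) : fm -> fm -> Prop :=
| r0_refl c : repl0 p q c c
| r0_here : repl0 p q p q
| r0_tens a a' b b' : repl0 p q a a' -> repl0 p q b b' -> repl0 p q (Tens a b) (Tens a' b')
| r0_circ a a' b b' : repl0 p q a a' -> repl0 p q b b' -> repl0 p q (Circ a b) (Circ a' b')
| r0_star a a' : repl0 p q a a' -> repl0 p q (Star a) (Star a').

Inductive repl1 (p q : fm) : fm -> fm -> Prop :=
| r1_here : repl1 p q p q
| r1_tensl a a' b b' : repl1 p q a a' -> repl0 p q b b' -> repl1 p q (Tens a b) (Tens a' b')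
| r1_tensr a a' b b' : repl0 p q a a' -> repl1 p q b b' -> repl1 p q (Tens a b) (Tens a' b')
| r1_circl a a' b b' : repl1 p q a a' -> repl0 p q b b' -> repl1 p q (Circ a b) (Circ a' b')
| r1_circr a a' b b' : repl0 p q a a' -> repl1 p q b b' -> repl1 p q (Circ a b) (Circ a' b')
| r1_star a a' : repl1 p q a a' -> repl1 p q (Star a) (Star a').

Inductive derivI (Γ : fm -> Prop) : fm -> Prop :=
| d_hyp a : Γ a -> derivI Γ a
| d_A1 a : derivI Γ (Imp a a)
| d_A2 a b : derivI Γ (Imp (Circ a b) (Circ b a))
| d_A3 a : derivI Γ (Imp a (Star (Star a)))
| d_A4 a b : derivI Γ (Imp (Imp a b) (Circ a b))
| d_A5 a b : derivI Γ (Iff (Tens a b) (Tens b a))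
| d_A6 a b c : derivI Γ (Imp (Imp (Tens a b) c) (Imp (Tens a (Star c)) (Star b)))
| d_A7 a b c : derivI Γ (Imp (NIff3 a b c)
                          (Imp (Imp a b) (Imp (Imp b c) (Imp a c))))
| d_MP a b : derivI Γ (Imp a b) -> derivI Γ a -> derivI Γ b
| d_adj a b : derivI Γ a -> derivI Γ b -> derivI Γ (Tens a b)
| d_repl a b c c' : repl1 a b c c' -> derivI Γ (Iff a b) -> derivI Γ c -> derivI Γ c'
| d_simp a b : derivI Γ (Tens a b) -> derivI Γ a
| d_I a b : derivI Γ (Imp a (Star a)) -> derivI Γ b.

Record weakNAlg : Type := {
  car :> Type;
  otens : car -> car -> car;
  ocirc : car -> car -> car;
  ostar : car -> car;
  tens_comm : forall x y, otens x y = otens y x;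
  circ_comm : forall x y, ocirc x y = ocirc y x;
  star_inv : forall x, ostar (ostar x) = x;
  tens_circ : forall x y z, ocirc (otens x y) z = ocirc (otens x z) y
}.

Section Ops.
Variable A : weakNAlg.
Definition aimp (x y : A) : A := ostar A (ocirc A x (ostar A y)).
Definition aiff (x y : A) : A := otens A (aimp x y) (aimp y x).
Definition aniff (x y : A) : A := ostar A (aiff x y).
Definition aniff3 (x y z : A) : A :=
  otens A (otens A (aniff x y) (aniff x z)) (aniff y z).
End Ops.

Inductive ext (A : Type) : Type :=
| El : A -> ext A
| Tt : ext A
| Ff : ext A.
Arguments El {A} _.
Arguments Tt {A}.
Arguments Ff {A}.

Record NwModel : Type := {
  alg : weakNAlg;
  perp : ext alg -> ext alg -> Prop;
  c_a : forall x : alg, perp (El x) (El (ostar alg x));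
  c_b : forall x y : alg, perp (El x) (El (ostar alg y)) ->
          perp (El y) (El (ostar alg x)) -> x = y;
  c_c : forall x y : alg, perp (El x) (El y) <-> perp (El (ocirc alg x y)) Tt;
  c_d : forall x : alg, perp (El x) Tt <-> perp (El (ostar alg x)) Ff;
  c_e : forall x y : alg, (perp (El x) Ff /\ perp (El y) Ff) <->
          perp (El (otens alg x y)) Ff;
  c_f : forall x y : alg,
          perp (El (ostar alg (ocirc alg x (ostar alg y))))
               (El (ostar alg (ocirc alg x y)));
  c_g : forall x y : alg, perp (El x) (El y) -> perp (El x) Ff -> perp (El y) Tt;
  c_h : forall x y z : alg,
          perp (El (aniff3 alg x y z))
               (El (ostar alg (aimp alg (aimp alg x y)
                                 (aimp alg (aimp alg y z) (aimp alg x z)))))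
}.

Definition modelI (M : NwModel) : Prop :=
  forall x y : alg M, perp M (El x) (El x) -> x = y.

Definition Fperp (M : NwModel) (a : alg M) : Prop := perp M (El a) Ff.

Definition is_hom (A : weakNAlg) (h : fm -> A) : Prop :=
  (forall a b, h (Tens a b) = otens A (h a) (h b)) /\
  (forall a b, h (Circ a b) = ocirc A (h a) (h b)) /\
  (forall a, h (Star a) = ostar A (h a)).

Definition sem_cons (K : NwModel -> Prop) (Γ : fm -> Prop) (φ : fm) : Prop :=
  exists Γ' : list fm,
    (forall g, In g Γ' -> Γ g) /\
    forall M : NwModel, K M ->
      forall h : fm -> alg M, is_hom (alg M) h ->
        (forall g, In g Γ' -> Fperp M (h g)) -> Fperp M (h φ).

(* Main.v *)
Require Import Defs.
From Stdlib Require Import List Setoid ClassicalEpsilon ProofIrrelevance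
  FunctionalExtensionality PropExtensionality.
Import ListNotations.

Lemma repl0_cases a b c c' : repl0 a b c c' -> c = c' \/ repl1 a b c c'.
Proof.
  induction 1.
  - left; reflexivity.
  - right; constructor.
  - destruct IHrepl0_1; destruct IHrepl0_2;
      [left; subst; reflexivity | right; apply r1_tensr; auto
      | right; apply r1_tensl; auto | right; apply r1_tensl; auto].
  - destruct IHrepl0_1; destruct IHrepl0_2;
      [left; subst; reflexivity | right; apply r1_circr; auto
      | right; apply r1_circl; auto | right; apply r1_circl; auto].
  - destruct IHrepl0; [left; subst; reflexivity | right; apply r1_star; auto].
Qed.

Lemma repl1_0 a b c c' : repl1 a b c c' -> repl0 a b c c'.
Proof.
  induction 1; try (constructor; auto; fail).
Qed.

Lemma D_repl0 G a b c c' : repl0 a b c c' -> derivI G (Iff a b) -> derivI G c -> derivI G c'.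
Proof.
  intros H Hab Hc. destruct (repl0_cases _ _ _ _ H) as [<-|H1]; auto.
  eapply d_repl; eauto.
Qed.

Definition E G a b := derivI G (Iff a b).

Lemma E_refl G a : E G a a.
Proof. unfold E, Iff. apply d_adj; apply d_A1. Qed.

Lemma E_ctx G a a' c c' : repl0 a a' c c' -> E G a a' -> E G c c'.
Proof.
  intros H Ha. unfold E. apply (D_repl0 G a a' (Iff c c) (Iff c c')); [|exact Ha|apply E_refl].
  unfold Iff, Imp. apply r0_tens; apply r0_star; apply r0_circ.
  - apply r0_refl.
  - apply r0_star; exact H.
  - exact H.
  - apply r0_refl.
Qed.

Lemma E_sym G a b : E G a b -> E G b a.
Proof.
  intros H. unfold E. apply (D_repl0 G a b (Iff a a) (Iff b a)); [|exact H|apply E_refl].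
  unfold Iff, Imp. apply r0_tens; apply r0_star; apply r0_circ.
  - apply r0_here.
  - apply r0_refl.
  - apply r0_refl.
  - apply r0_star; apply r0_here.
Qed.

Lemma E_trans G a b c : E G a b -> E G b c -> E G a c.
Proof.
  intros H1 H2. unfold E. apply (D_repl0 G b c (Iff a b) (Iff a c)); [|exact H2|exact H1].
  unfold Iff, Imp. apply r0_tens; apply r0_star; apply r0_circ.
  - apply r0_refl.
  - apply r0_star; apply r0_here.
  - apply r0_here.
  - apply r0_refl.
Qed.

Lemma D_resp G a b : E G a b -> derivI G a -> derivI G b.
Proof. intros H Ha. eapply d_repl; [apply r1_here| exact H | exact Ha]. Qed.

Lemma E_Tens G a a' b b' : E G a a' -> E G b b' -> E G (Tens a b) (Tens a' b').
Proof.
  intros H1 H2. apply E_trans with (Tens a' b).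
  - eapply E_ctx; [|exact H1]. apply r0_tens; [apply r0_here|apply r0_refl].
  - eapply E_ctx; [|exact H2]. apply r0_tens; [apply r0_refl|apply r0_here].
Qed.

Lemma E_Circ G a a' b b' : E G a a' -> E G b b' -> E G (Circ a b) (Circ a' b').
Proof.
  intros H1 H2. apply E_trans with (Circ a' b).
  - eapply E_ctx; [|exact H1]. apply r0_circ; [apply r0_here|apply r0_refl].
  - eapply E_ctx; [|exact H2]. apply r0_circ; [apply r0_refl|apply r0_here].
Qed.

Lemma E_Star G a a' : E G a a' -> E G (Star a) (Star a').
Proof. intros H. eapply E_ctx; [|exact H]. apply r0_star; apply r0_here. Qed.

Lemma E_Imp G a a' b b' : E G a a' -> E G b b' -> E G (Imp a b) (Imp a' b').
Proof. intros. unfold Imp. apply E_Star, E_Circ; auto. apply E_Star; auto. Qed.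

Lemma E_comm_circ G a b : E G (Circ a b) (Circ b a).
Proof. apply d_adj; apply d_A2. Qed.

Lemma E_comm_tens G a b : E G (Tens a b) (Tens b a).
Proof. apply d_A5. Qed.

Lemma E_ss G a : E G (Star (Star a)) a.
Proof.
  apply d_adj.
  - apply D_resp with (a := Star (Circ (Star a) (Star (Star a)))).
    + apply E_Star, E_comm_circ.
    + apply (d_A1 G (Star a)).
  - apply d_A3.
Qed.

Lemma TC G a b z : derivI G (Imp (Circ (Tens a z) b) (Circ (Tens a b) z)).
Proof.
  pose proof (d_A6 G a b (Star z)) as H.
  eapply D_resp; [|exact H].
  change (E G (Star (Circ (Star (Circ (Tens a b) (Star (Star z))))
                 (Star (Star (Circ (Tens a (Star (Star z))) (Star (Star b)))))))
              (Star (Circ (Circ (Tens a z) b) (Star (Circ (Tens a b) z))))).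
  apply E_trans with (Star (Circ (Star (Circ (Tens a b) z)) (Circ (Tens a z) b))).
  - apply E_Star, E_Circ.
    + apply E_Star, E_Circ; [apply E_refl| apply E_ss].
    + eapply E_trans; [apply E_ss|].
      apply E_Circ; [apply E_Tens; [apply E_refl|apply E_ss]| apply E_ss].
  - apply E_Star, E_comm_circ.
Qed.

Lemma E_tc G x y z : E G (Circ (Tens x y) z) (Circ (Tens x z) y).
Proof. apply d_adj; apply TC. Qed.

Definition rep G (a : fm) : fm := epsilon (inhabits a) (E G a).

Lemma rep_spec G a : E G a (rep G a).
Proof. unfold rep. apply epsilon_spec. exists a. apply E_refl. Qed.

Lemma rep_eq G a b : E G a b -> rep G a = rep G b.
Proof.
  intros H. unfold rep.
  rewrite (proof_irrelevance _ (inhabits a) (inhabits b)).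
  f_equal. apply functional_extensionality. intros c.
  apply propositional_extensionality. split; intros H1.
  - eapply E_trans; [apply E_sym, H| exact H1].
  - eapply E_trans; [exact H| exact H1].
Qed.

Lemma rep_idem G a : rep G (rep G a) = rep G a.
Proof. apply rep_eq. apply E_sym, rep_spec. Qed.

Definition Q G := {a : fm | rep G a = a}.
Definition mk G a : Q G := exist _ (rep G a) (rep_idem G a).

Lemma Q_eq_val G (x y : Q G) : proj1_sig x = proj1_sig y -> x = y.
Proof.
  destruct x as [a Ha], y as [b Hb]; simpl; intros ->. f_equal. apply proof_irrelevance.
Qed.

Lemma mk_eq G a b : E G a b -> mk G a = mk G b.
Proof. intros H. apply Q_eq_val. simpl. apply rep_eq, H. Qed.

Lemma Q_surj G (x : Q G) : exists a, x = mk G a.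
Proof.
  destruct x as [a Ha]. exists a. apply Q_eq_val. simpl. symmetry; exact Ha.
Qed.

Definition qtens G (x y : Q G) : Q G := mk G (Tens (proj1_sig x) (proj1_sig y)).
Definition qcirc G (x y : Q G) : Q G := mk G (Circ (proj1_sig x) (proj1_sig y)).
Definition qstar G (x : Q G) : Q G := mk G (Star (proj1_sig x)).

Lemma hom_tens G a b : qtens G (mk G a) (mk G b) = mk G (Tens a b).
Proof. apply mk_eq. simpl. apply E_Tens; apply E_sym, rep_spec. Qed.
Lemma hom_circ G a b : qcirc G (mk G a) (mk G b) = mk G (Circ a b).
Proof. apply mk_eq. simpl. apply E_Circ; apply E_sym, rep_spec. Qed.
Lemma hom_star G a : qstar G (mk G a) = mk G (Star a).
Proof. apply mk_eq. simpl. apply E_Star; apply E_sym, rep_spec. Qed.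

Ltac homs := repeat first [rewrite hom_tens | rewrite hom_circ | rewrite hom_star].

Lemma q_tens_comm G (x y : Q G) : qtens G x y = qtens G y x.
Proof.
  destruct (Q_surj G x) as [a ->]; destruct (Q_surj G y) as [b ->]; homs.
  apply mk_eq, E_comm_tens.
Qed.
Lemma q_circ_comm G (x y : Q G) : qcirc G x y = qcirc G y x.
Proof.
  destruct (Q_surj G x) as [a ->]; destruct (Q_surj G y) as [b ->]; homs.
  apply mk_eq, E_comm_circ.
Qed.
Lemma q_star_inv G (x : Q G) : qstar G (qstar G x) = x.
Proof.
  destruct (Q_surj G x) as [a ->]; homs. apply mk_eq, E_ss.
Qed.
Lemma q_tens_circ G (x y z : Q G) : qcirc G (qtens G x y) z = qcirc G (qtens G x z) y.
Proof.
  destruct (Q_surj G x) as [a ->]; destruct (Q_surj G y) as [b ->];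
  destruct (Q_surj G z) as [c ->]; homs. apply mk_eq, E_tc.
Qed.

Definition TA G : weakNAlg :=
  Build_weakNAlg (Q G) (qtens G) (qcirc G) (qstar G)
    (q_tens_comm G) (q_circ_comm G) (q_star_inv G) (q_tens_circ G).

Definition pp G (u v : ext (Q G)) : Prop :=
  match u, v with
  | El x, El y => derivI G (Imp (proj1_sig x) (Star (proj1_sig y)))
  | El x, Tt => derivI G (Star (proj1_sig x))
  | El x, Ff => derivI G (proj1_sig x)
  | _, _ => False
  end.

Lemma D_iff G a b : E G a b -> (derivI G a <-> derivI G b).
Proof. intros H; split; apply D_resp; auto. apply E_sym; auto. Qed.

Lemma pp_EE G a b : pp G (El (mk G a)) (El (mk G b)) <-> derivI G (Imp a (Star b)).
Proof. simpl. apply D_iff. apply E_sym, E_Imp; [|apply E_Star]; apply rep_spec. Qed.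
Lemma pp_ET G a : pp G (El (mk G a)) Tt <-> derivI G (Star a).
Proof. simpl. apply D_iff. apply E_sym, E_Star; apply rep_spec. Qed.
Lemma pp_EF G a : pp G (El (mk G a)) Ff <-> derivI G a.
Proof. simpl. apply D_iff. apply E_sym; apply rep_spec. Qed.

Ltac surj G := repeat match goal with
  | x : Q G |- _ => let a := fresh "a" in destruct (Q_surj G x) as [a ->]
  end.

Lemma cond_a G (x : Q G) : pp G (El x) (El (qstar G x)).
Proof.
  surj G; homs. apply pp_EE. apply d_A3.
Qed.

Lemma cond_b G (x y : Q G) : pp G (El x) (El (qstar G y)) ->
          pp G (El y) (El (qstar G x)) -> x = y.
Proof.
  surj G; homs. rewrite !pp_EE. intros H1 H2. apply mk_eq. apply d_adj.
  - eapply D_resp; [|exact H1]. apply E_Imp; [apply E_refl|apply E_ss].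
  - eapply D_resp; [|exact H2]. apply E_Imp; [apply E_refl|apply E_ss].
Qed.

Lemma cond_c G (x y : Q G) : pp G (El x) (El y) <-> pp G (El (qcirc G x y)) Tt.
Proof.
  surj G; homs. rewrite pp_EE, pp_ET. apply D_iff. unfold Imp.
  apply E_Star, E_Circ; [apply E_refl|apply E_ss].
Qed.

Lemma cond_d G (x : Q G) : pp G (El x) Tt <-> pp G (El (qstar G x)) Ff.
Proof. surj G; homs. rewrite pp_EF, pp_ET. tauto. Qed.

Lemma cond_e G (x y : Q G) : (pp G (El x) Ff /\ pp G (El y) Ff) <->
          pp G (El (qtens G x y)) Ff.
Proof.
  surj G; homs. rewrite !pp_EF. split.
  - intros [H1 H2]; apply d_adj; auto.
  - intros H; split; first [eapply d_simp; exact H |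
      eapply d_simp; eapply D_resp; [apply E_comm_tens|exact H]].
Qed.

Lemma cond_f G (x y : Q G) :
  pp G (El (qstar G (qcirc G x (qstar G y)))) (El (qstar G (qcirc G x y))).
Proof.
  surj G; homs. apply pp_EE. eapply D_resp; [|apply (d_A4 G a0 a)].
  apply E_Imp; [apply E_refl|]. apply E_sym, E_ss.
Qed.

Lemma cond_g G (x y : Q G) : pp G (El x) (El y) -> pp G (El x) Ff -> pp G (El y) Tt.
Proof.
  surj G. rewrite pp_EE, pp_EF, pp_ET. intros H1 H2. eapply d_MP; eauto.
Qed.

Lemma cond_h G (x y z : Q G) :
  pp G (El (aniff3 (TA G) x y z))
       (El (ostar (TA G) (aimp (TA G) (aimp (TA G) x y)
             (aimp (TA G) (aimp (TA G) y z) (aimp (TA G) x z))))).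
Proof.
  unfold aniff3, aniff, aiff, aimp.
  change (otens (TA G)) with (qtens G).
  change (ocirc (TA G)) with (qcirc G).
  change (ostar (TA G)) with (qstar G).
  surj G; homs. apply pp_EE. eapply D_resp; [|apply (d_A7 G a1 a0 a)].
  apply E_Imp; [apply E_refl|]. apply E_sym, E_ss.
Qed.

Definition TM G : NwModel :=
  Build_NwModel (TA G) (pp G) (cond_a G) (cond_b G) (cond_c G) (cond_d G)
    (cond_e G) (cond_f G) (cond_g G) (cond_h G).

Lemma TM_I G : modelI (TM G).
Proof.
  intros x y. change (Q G) in x, y. change (pp G (El x) (El x) -> x = y).
  surj G. rewrite pp_EE. intros H.
  apply mk_eq. eapply d_I; exact H.
Qed.

Lemma complete G φ : sem_cons modelI G φ -> derivI G φ.
Proof.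
  intros [l [Hl Hm]].
  assert (Hh : is_hom (alg (TM G)) (mk G)).
  { split; [|split]; intros; symmetry; simpl;
      [apply hom_tens|apply hom_circ|apply hom_star]. }
  specialize (Hm (TM G) (TM_I G) (mk G) Hh).
  unfold Fperp in Hm. simpl in Hm.
  apply (pp_EF G φ). apply Hm. intros g Hg. apply (pp_EF G g). apply d_hyp; auto.
Qed.

Lemma F_imp M (x y : alg M) :
  Fperp M (aimp (alg M) x y) <-> perp M (El x) (El (ostar (alg M) y)).
Proof.
  unfold Fperp, aimp. rewrite <- (c_d M). rewrite <- (c_c M). tauto.
Qed.

Lemma F_iff M (x y : alg M) : Fperp M (aiff (alg M) x y) -> x = y.
Proof.
  unfold aiff, Fperp. intros H. apply (c_e M) in H. destruct H as [H1 H2].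
  apply (F_imp M) in H1. apply (F_imp M) in H2. apply (c_b M); auto.
Qed.

Lemma F_MP M (x y : alg M) : Fperp M (aimp (alg M) x y) -> Fperp M x -> Fperp M y.
Proof.
  intros H1 H2. apply (F_imp M) in H1. unfold Fperp in *.
  pose proof (c_g M _ _ H1 H2) as H. apply (c_d M) in H.
  rewrite star_inv in H. exact H.
Qed.

Lemma hom_repl0 (A : weakNAlg) h a b c c' : is_hom A h -> h a = h b ->
  repl0 a b c c' -> h c = h c'.
Proof.
  intros [Ht [Hc Hs]] Hab. induction 1; auto.
  - rewrite !Ht; congruence.
  - rewrite !Hc; congruence.
  - rewrite !Hs; congruence.
Qed.

Ltac hexp Ht Hc Hs := unfold NIff3, NIff, Iff, Imp in *;
  repeat first [rewrite Ht in * | rewrite Hc in * | rewrite Hs in *].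

Lemma sc0 G φ : (forall M, modelI M -> forall h, is_hom (alg M) h -> Fperp M (h φ)) ->
  sem_cons modelI G φ.
Proof. intros H. exists nil. split; [intros g []|]. intros; auto. Qed.

Lemma sc1 G a b : sem_cons modelI G a ->
  (forall M, modelI M -> forall h, is_hom (alg M) h -> Fperp M (h a) -> Fperp M (h b)) ->
  sem_cons modelI G b.
Proof.
  intros [l [Hl Hm]] H. exists l. split; [exact Hl|]. intros M HM h Hh Hg.
  apply H; auto.
Qed.

Lemma sc2 G a b c : sem_cons modelI G a -> sem_cons modelI G b ->
  (forall M, modelI M -> forall h, is_hom (alg M) h -> Fperp M (h a) ->
      Fperp M (h b) -> Fperp M (h c)) ->
  sem_cons modelI G c.
Proof.
  intros [l1 [Hl1 Hm1]] [l2 [Hl2 Hm2]] H. exists (l1 ++ l2). split.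
  - intros g Hg. apply in_app_or in Hg. destruct Hg; auto.
  - intros M HM h Hh Hg. apply H; auto.
    + apply Hm1; auto. intros g Hg'; apply Hg; apply in_or_app; auto.
    + apply Hm2; auto. intros g Hg'; apply Hg; apply in_or_app; auto.
Qed.

Lemma sound G φ : derivI G φ -> sem_cons modelI G φ.
Proof.
  induction 1.
  - exists [a]. split.
    + intros g [->|[]]; auto.
    + intros M _ h _ Hg. apply Hg. left; reflexivity.
  - apply sc0. intros M _ h [Ht [Hc Hs]]. hexp Ht Hc Hs.
    apply (F_imp M). apply c_a.
  - apply sc0. intros M _ h [Ht [Hc Hs]]. hexp Ht Hc Hs.
    apply (F_imp M). rewrite (circ_comm _ (h a) (h b)). apply c_a.
  - apply sc0. intros M _ h [Ht [Hc Hs]]. hexp Ht Hc Hs.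
    apply (F_imp M). rewrite star_inv. apply c_a.
  - apply sc0. intros M _ h [Ht [Hc Hs]]. hexp Ht Hc Hs.
    apply (F_imp M). apply c_f.
  - apply sc0. intros M _ h [Ht [Hc Hs]]. hexp Ht Hc Hs.
    apply (c_e M). split; apply (F_imp M).
    + rewrite (tens_comm _ (h b) (h a)). apply c_a.
    + rewrite (tens_comm _ (h a) (h b)). apply c_a.
  - apply sc0. intros M _ h [Ht [Hc Hs]]. hexp Ht Hc Hs.
    apply (F_imp M).
    assert (EV : ostar (alg M) (ocirc (alg M) (otens (alg M) (h a) (ostar (alg M) (h c)))
                   (ostar (alg M) (ostar (alg M) (h b))))
               = ostar (alg M) (ocirc (alg M) (otens (alg M) (h a) (h b)) (ostar (alg M) (h c)))).
    { rewrite (star_inv _ (h b)). rewrite tens_circ. reflexivity. }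
    rewrite EV. apply c_a.
  - apply sc0. intros M _ h [Ht [Hc Hs]]. hexp Ht Hc Hs.
    apply (F_imp M). exact (c_h M (h a) (h b) (h c)).
  - eapply sc2; [exact IHderivI1 | exact IHderivI2|].
    intros M _ h [Ht [Hc Hs]] F1 F2. hexp Ht Hc Hs.
    eapply F_MP; [exact F1|exact F2].
  - eapply sc2; [exact IHderivI1 | exact IHderivI2|].
    intros M _ h [Ht [Hc Hs]] F1 F2. rewrite Ht. apply (c_e M); auto.
  - eapply sc2; [exact IHderivI1 | exact IHderivI2|].
    intros M _ h Hh F1 F2.
    assert (Hab : h a = h b).
    { destruct Hh as [Ht [Hc Hs]]. apply (F_iff M). hexp Ht Hc Hs. exact F1. }
    rewrite <- (hom_repl0 _ h a b c c' Hh Hab (repl1_0 _ _ _ _ H)). exact F2.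
  - eapply sc1; [exact IHderivI|].
    intros M _ h [Ht [Hc Hs]] F1. rewrite Ht in F1. apply (c_e M) in F1. tauto.
  - eapply sc1; [exact IHderivI|].
    intros M HI h [Ht [Hc Hs]] F1. hexp Ht Hc Hs.
    apply (F_imp M) in F1. rewrite star_inv in F1.
    assert (e : forall u v : alg M, u = v).
    { intros u v. transitivity (h a); [symmetry|]; apply HI; exact F1. }
    unfold Fperp. set (z := h b).
    pose proof (c_a M z) as Hz. rewrite (e (ostar _ z) z) in Hz.
    apply (c_c M) in Hz. rewrite (e (ocirc _ z z) z) in Hz.
    apply (c_d M) in Hz. rewrite (e (ostar _ z) z) in Hz. exact Hz.
Qed.

Theorem theorem5p3 :
  forall (Γ : fm -> Prop) (φ : fm), derivI Γ φ <-> sem_cons modelI Γ φ.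
Proof.
  intros G φ. split; [apply sound | apply complete].
Qed.
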